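(* Let $P=\{p_1,\dots,p_n\}$ be weighted points in $\mathbb{R}^2$ with total weight $1$, let $S=\{s_1,\dots,s_m\}$ be line segments in $\mathbb{R}^2$ of total length $1$, let $\delta>0$, and let $Q$ be the set of subsegments produced by the subdivision procedure in the context. Then $|Q|=O\!\left(\frac{nm}{\delta}\log\frac1\delta\right)$.
   Context: Subdivision procedure: starting with the segments of $S$, repeatedly, for each current subsegment $s'$: if there is a point of $P$ such that all of $s'$ lies within Euclidean distance $\delta/(nm)$ of it, leave $s'$ as is; otherwise, if there is a point $p\in P$ for which the ratio between the largest and the smallest distance from $p$ to points of $s'$ exceeds $1+\delta$, cut $s'$ into two halves. $Q$ is the final set of subsegments. *)

(* Defs.v *)
From Stdlib Require Import Reals Lra List Arith.
From Coquelicot Require Import Coquelicot.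
Open Scope R_scope.

Definition pt : Type := (R * R)%type.

Definition dist2 (p q : pt) : R :=
  sqrt ((fst p - fst q) ^ 2 + (snd p - snd q) ^ 2).

Definition segment : Type := (pt * pt)%type.

Definition seg_len (s : segment) : R := dist2 (fst s) (snd s).

Definition lerp (s : segment) (t : R) : pt :=
  (fst (fst s) + t * (fst (snd s) - fst (fst s)),
   snd (fst s) + t * (snd (snd s) - snd (fst s))).

Definition on_seg (s : segment) (x : pt) : Prop :=
  exists t, 0 <= t <= 1 /\ x = lerp s t.

Definition max_dist (p : pt) (s : segment) : Rbar :=
  Lub_Rbar (fun r => exists x, on_seg s x /\ r = dist2 p x).
Definition min_dist (p : pt) (s : segment) : Rbar :=
  Glb_Rbar (fun r => exists x, on_seg s x /\ r = dist2 p x).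

Definition within (p : pt) (s : segment) (eps : R) : Prop :=
  forall x, on_seg s x -> dist2 p x <= eps.

(* the ratio largest/smallest distance from p to s exceeds 1+delta
   (written multiplicatively; a smallest distance 0 with a positive largest
   distance counts as an infinite ratio) *)
Definition ratio_exceeds (p : pt) (s : segment) (delta : R) : Prop :=
  Rbar_lt (Rbar_mult (Finite (1 + delta)) (min_dist p s)) (max_dist p s).

(* The subdivision rule: a current subsegment s' is cut into two halves iff
   no point of P has all of s' within delta/(nm), and some point of P has
   distance ratio exceeding 1+delta. *)
Definition cut (n m : nat) (P : nat -> pt) (delta : R) (s : segment) : Prop :=
  ~ (exists i, (i < n)%nat /\ within (P i) s (delta / (INR n * INR m))) /\
  (exists i, (i < n)%nat /\ ratio_exceeds (P i) s delta).

Definition piece (s : segment) (k i : nat) : segment :=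
  (lerp s (INR i / 2 ^ k), lerp s (INR (S i) / 2 ^ k)).

(* (j,k,i) is a final subsegment (element of Q): the i-th level-k dyadic piece
   of segment S j, all of whose ancestors were cut and which is not cut. *)
Definition final_piece (n m : nat) (P : nat -> pt) (S : nat -> segment)
    (delta : R) (jki : nat * nat * nat) : Prop :=
  let '(j, k, i) := jki in
  (j < m)%nat /\ (i < 2 ^ k)%nat /\
  (forall k', (k' < k)%nat ->
     cut n m P delta (piece (S j) k' (Nat.div i (2 ^ (k - k'))))) /\
  ~ cut n m P delta (piece (S j) k i).

Definition sumR (n : nat) (f : nat -> R) : R :=
  fold_right Rplus 0 (map f (seq 0 n)).

(* Main.v *)
Require Import Defs.
From Stdlib Require Import Reals Lra List Arith Lia Classical ClassicalDescription.
From Coquelicot Require Import Coquelicot.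
Open Scope R_scope.

Lemma dist2_sym p q : dist2 p q = dist2 q p.
Proof. unfold dist2. f_equal. ring. Qed.

Lemma dist2_nonneg p q : 0 <= dist2 p q.
Proof. apply sqrt_pos. Qed.

Lemma dist2_tri p q r : dist2 p r <= dist2 p q + dist2 q r.
Proof.
  unfold dist2.
  set (a := fst p - fst q). set (b := snd p - snd q).
  set (c := fst q - fst r). set (d := snd q - snd r).
  replace (fst p - fst r) with (a + c) by (unfold a, c; ring).
  replace (snd p - snd r) with (b + d) by (unfold b, d; ring).
  assert (H1 : 0 <= a^2 + b^2) by nra.
  assert (H2 : 0 <= c^2 + d^2) by nra.
  pose proof (sqrt_pos (a^2+b^2)). pose proof (sqrt_pos (c^2+d^2)).
  apply Rsqr_incr_0_var; [|lra].
  rewrite Rsqr_sqrt by (apply Rplus_le_le_0_compat; apply pow2_ge_0).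
  unfold Rsqr.
  assert (Hm : a*c + b*d <= sqrt (a^2+b^2) * sqrt (c^2+d^2)).
  { rewrite <- sqrt_mult_alt by nra.
    destruct (Rle_or_lt (a*c+b*d) 0). { pose proof (sqrt_pos ((a^2+b^2)*(c^2+d^2))). lra. }
    apply Rsqr_incr_0_var; [|apply sqrt_pos].
    rewrite Rsqr_sqrt by (apply Rmult_le_pos; assumption). unfold Rsqr. pose proof (pow2_ge_0 (a*d-b*c)). nra. }
  replace ((sqrt (a ^ 2 + b ^ 2) + sqrt (c ^ 2 + d ^ 2)) * (sqrt (a ^ 2 + b ^ 2) + sqrt (c ^ 2 + d ^ 2)))
   with (sqrt (a ^ 2 + b ^ 2) * sqrt (a ^ 2 + b ^ 2) + sqrt (c ^ 2 + d ^ 2) * sqrt (c ^ 2 + d ^ 2)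
          + 2 * (sqrt (a ^ 2 + b ^ 2) * sqrt (c ^ 2 + d ^ 2))) by ring.
  rewrite !sqrt_sqrt by nra. nra.
Qed.

Lemma dist_lerp s a b : dist2 (lerp s a) (lerp s b) = Rabs (a - b) * seg_len s.
Proof.
  unfold seg_len, dist2, lerp.
  destruct s as [[x1 y1] [x2 y2]]; cbn [fst snd].
  transitivity (sqrt (Rsqr (a - b) * ((x1 - x2) ^ 2 + (y1 - y2) ^ 2))).
  { f_equal. unfold Rsqr. ring. }
  rewrite sqrt_mult_alt by apply Rle_0_sqr. rewrite sqrt_Rsqr_abs. reflexivity.
Qed.

Lemma seg_len_nonneg s : 0 <= seg_len s.
Proof. apply sqrt_pos. Qed.

Lemma pow2R_pos k : 0 < 2 ^ k.
Proof. apply pow_lt. lra. Qed.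

Lemma lerp_piece s k i u : lerp (piece s k i) u = lerp s ((INR i + u) / 2 ^ k).
Proof.
  pose proof (pow2R_pos k).
  unfold piece, lerp; cbn [fst snd]. rewrite S_INR.
  f_equal; field; lra.
Qed.

Lemma seg_len_piece s k i : seg_len (piece s k i) = seg_len s / 2 ^ k.
Proof.
  pose proof (pow2R_pos k).
  unfold seg_len at 1, piece; cbn [fst snd]. rewrite dist_lerp. rewrite S_INR.
  replace (INR i / 2 ^ k - (INR i + 1) / 2 ^ k) with (- (1 / 2^k)) by (field; lra).
  rewrite Rabs_Ropp, Rabs_pos_eq. field; lra. apply Rlt_le. apply Rdiv_lt_0_compat; lra.
Qed.

Lemma on_seg_dist s x y : on_seg s x -> on_seg s y -> dist2 x y <= seg_len s.
Proof.
  intros [t [Ht ->]] [u [Hu ->]]. rewrite dist_lerp.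
  pose proof (seg_len_nonneg s).
  assert (Rabs (t - u) <= 1) by (apply Rabs_le; lra). nra.
Qed.

Lemma cut_facts s p eps delta : 0 < delta -> ~ Defs.within p s eps -> ratio_exceeds p s delta ->
  0 < seg_len s /\ (exists x, on_seg s x /\ delta * dist2 p x < 2 * seg_len s) /\
  eps * delta < seg_len s * (2 + delta).
Proof.
  intros Hd Hw Hr.
  unfold ratio_exceeds, min_dist, max_dist in Hr.
  set (E := fun r => exists x, on_seg s x /\ r = dist2 p x) in Hr.
  set (L := seg_len s).
  assert (Ha : on_seg s (lerp s 0)) by (exists 0; split; [lra|reflexivity]).
  assert (HL0 : 0 <= L) by apply seg_len_nonneg.
  assert (Hub : forall x y, on_seg s x -> on_seg s y -> dist2 p y <= dist2 p x + L).
  { intros x y Hx Hy. pose proof (dist2_tri p x y). pose proof (on_seg_dist s x y Hx Hy). unfold L. lra. }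
  assert (HE0 : forall r, E r -> 0 <= r).
  { intros r [x [_ ->]]. apply dist2_nonneg. }
  generalize (Glb_Rbar_correct E) (Lub_Rbar_correct E).
  destruct (Glb_Rbar E) as [g| |]; destruct (Lub_Rbar E) as [M| |]; intros [Hlb Hgr] [Hub' Hlu]; simpl in Hr;
   try contradiction.
  all: try (exfalso; refine (Hlb (dist2 p (lerp s 0)) _); exists (lerp s 0); split; auto).
  all: try (exfalso; refine (Hgr (Finite 0) _); intros r Hr'; simpl; apply HE0; auto).
  all: try (exfalso; refine (Hlu (Finite (dist2 p (lerp s 0) + L)) _); intros r [y [Hy ->]]; simpl; apply Hub; auto).
  assert (HM : forall x, on_seg s x -> M <= dist2 p x + L).
  { intros x Hx. refine (Hlu (Finite (dist2 p x + L)) _). intros r [y [Hy ->]]; simpl; apply Hub; auto. }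
  assert (Hg0 : 0 <= g).
  { refine (Hgr (Finite 0) _). intros r Hr'; simpl; apply HE0; auto. }
  assert (Hg1 : (1 + delta) * g - L <= g).
  { refine (Hgr (Finite ((1 + delta) * g - L)) _). intros r [y [Hy ->]]; simpl.
    pose proof (HM y Hy). lra. }
  assert (HLp : 0 < L).
  { destruct (Rle_or_lt L 0) as [H0|H0]; [|exact H0]. exfalso.
    assert (g = 0) by nra. subst g.
    assert (M <= 0).
    { refine (Hgr (Finite M) _). intros r [y [Hy ->]]; simpl. pose proof (HM y Hy). lra. }
    lra. }
  assert (Hx : exists x, on_seg s x /\ delta * dist2 p x < 2 * L).
  { destruct (classic (exists x, on_seg s x /\ delta * dist2 p x < 2 * L)) as [H|H]; [exact H|].
    exfalso.
    assert (2 * L / delta <= g).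
    { refine (Hgr (Finite (2 * L / delta)) _). intros r [y [Hy ->]]; simpl.
      destruct (Rle_or_lt (2 * L / delta) (dist2 p y)) as [H1|H1]; [exact H1|].
      exfalso. apply H. exists y. split; auto.
      apply (Rmult_lt_compat_l delta) in H1; [|lra]. field_simplify in H1; lra. }
    apply (Rmult_le_compat_l delta) in H0; [|lra]. field_simplify in H0; [|lra]. nra. }
  split; [exact HLp|]. split; [exact Hx|].
  destruct Hx as [x [Hx Hdx]].
  assert (Hy : exists y, on_seg s y /\ eps < dist2 p y).
  { apply NNPP. intro H. apply Hw. intros y Hy.
    destruct (Rle_or_lt (dist2 p y) eps) as [H1|H1]; [exact H1|]. exfalso. apply H. exists y; auto. }
  destruct Hy as [y [Hy Hey]].
  pose proof (Hub x y Hx Hy). nra.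
Qed.

Lemma list_max_ex (l : list nat) : l <> nil -> exists a, In a l /\ forall x, In x l -> (x <= a)%nat.
Proof.
  induction l as [|y l IH]; intros H; [congruence|].
  destruct l as [|z l'].
  - exists y. split; [left; auto|]. intros x [<-|[]]; lia.
  - destruct IH as [a [Ha Hx]]; [discriminate|].
    destruct (Nat.le_gt_cases y a).
    + exists a. split; [right; auto|]. intros x [<-|Hx']; auto.
    + exists y. split; [left; auto|]. intros x [<-|Hx']; [lia|]. specialize (Hx x Hx'). lia.
Qed.

Lemma list_min_ex (l : list nat) : l <> nil -> exists a, In a l /\ forall x, In x l -> (a <= x)%nat.
Proof.
  induction l as [|y l IH]; intros H; [congruence|].
  destruct l as [|z l'].
  - exists y. split; [left; auto|]. intros x [<-|[]]; lia.
  - destruct IH as [a [Ha Hx]]; [discriminate|].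
    destruct (Nat.le_gt_cases a y).
    + exists a. split; [right; auto|]. intros x [<-|Hx']; auto.
    + exists y. split; [left; auto|]. intros x [<-|Hx']; [lia|]. specialize (Hx x Hx'). lia.
Qed.

Lemma count_window (l : list nat) (W : R) : 0 <= W -> NoDup l ->
  (forall x y, In x l -> In y l -> INR x - INR y < W) -> INR (length l) <= W + 1.
Proof.
  intros HW Hnd Hxy.
  destruct l as [|z l'] eqn:El.
  - simpl. lra.
  - rewrite <- El in *.
    assert (Hne : l <> nil) by (rewrite El; discriminate).
    destruct (list_max_ex l Hne) as [b [Hb Hbx]].
    destruct (list_min_ex l Hne) as [a [Ha Hax]].
    assert (Hab : (a <= b)%nat) by (apply Hbx; auto).
    assert (Hinc : incl l (seq a (S (b - a)))).
    { intros x Hx. apply in_seq. specialize (Hbx x Hx). specialize (Hax x Hx). lia. }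
    pose proof (NoDup_incl_length Hnd Hinc) as Hlen. rewrite length_seq in Hlen.
    apply le_INR in Hlen. rewrite S_INR, minus_INR in Hlen by auto.
    specialize (Hxy b a Hb Ha). lra.
Qed.

Definition tb (P : Prop) : bool := if excluded_middle_informative P then true else false.
Lemma tb_iff P : tb P = true <-> P.
Proof. unfold tb. destruct (excluded_middle_informative P); split; auto; discriminate. Qed.

Lemma near_window s k p delta i1 i2 : 0 < delta -> 0 < seg_len s ->
  (exists x, on_seg (piece s k i1) x /\ delta * dist2 p x < 2 * seg_len (piece s k i1)) ->
  (exists x, on_seg (piece s k i2) x /\ delta * dist2 p x < 2 * seg_len (piece s k i2)) ->
  INR i1 - INR i2 < 4 / delta + 1.
Proof.
  intros Hd Hs [x1 [[u1 [Hu1 ->]] H1]] [x2 [[u2 [Hu2 ->]] H2]].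
  rewrite seg_len_piece in H1, H2. rewrite !lerp_piece in *.
  pose proof (pow2R_pos k) as Hk.
  pose proof (dist2_tri (lerp s ((INR i1 + u1) / 2 ^ k)) p (lerp s ((INR i2 + u2) / 2 ^ k))) as Ht.
  rewrite (dist2_sym (lerp s _) p) in Ht. rewrite dist_lerp in Ht.
  set (Lk := seg_len s / 2 ^ k) in *.
  assert (HLk : 0 < Lk) by (unfold Lk; apply Rdiv_lt_0_compat; lra).
  replace ((INR i1 + u1) / 2 ^ k - (INR i2 + u2) / 2 ^ k) with ((INR i1 + u1 - INR i2 - u2) / 2^k) in Ht by (field; lra).
  rewrite Rabs_div, (Rabs_pos_eq (2^k)) in Ht by lra.
  replace (Rabs (INR i1 + u1 - INR i2 - u2) / 2 ^ k * seg_len s) with (Rabs (INR i1 + u1 - INR i2 - u2) * Lk) in Ht by (unfold Lk; field; lra).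
  pose proof (Rle_abs (INR i1 + u1 - INR i2 - u2)).
  assert (Rabs (INR i1 + u1 - INR i2 - u2) * Lk * delta < 4 * Lk) by nra.
  assert (Rabs (INR i1 + u1 - INR i2 - u2) * delta < 4) by nra.
  assert (Rabs (INR i1 + u1 - INR i2 - u2) < 4 / delta).
  { apply (Rmult_lt_reg_r delta); [lra|]. field_simplify; lra. }
  lra.
Qed.

Lemma ln2_pos : 0 < ln 2.
Proof. rewrite <- ln_1. apply ln_increasing; lra. Qed.

Lemma level_abs (c t B X : R) : 0 < t -> 1 <= B -> 0 <= c -> c <= t -> c <= B -> (0 < c -> t < X) ->
  c <= (Rmin (2*t) (2*B) - Rmin t (2*B)) + (B / ln 2) *
     (ln (Rmin (Rmax (2*t) B) (Rmax (2*X) B) / B) - ln (Rmin (Rmax t B) (Rmax (2*X) B) / B)).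
Proof.
  intros Ht HB Hc0 Hct HcB HX.
  pose proof ln2_pos as Hl2.
  assert (Hpsi : Rmin t (2*B) <= Rmin (2*t) (2*B)).
  { unfold Rmin; repeat destruct Rle_dec; lra. }
  assert (Hm1 : B <= Rmin (Rmax t B) (Rmax (2*X) B)).
  { unfold Rmin, Rmax; repeat destruct Rle_dec; lra. }
  assert (Hm2 : Rmin (Rmax t B) (Rmax (2*X) B) <= Rmin (Rmax (2*t) B) (Rmax (2*X) B)).
  { unfold Rmin, Rmax; repeat destruct Rle_dec; lra. }
  assert (Hphi : ln (Rmin (Rmax t B) (Rmax (2*X) B) / B) <= ln (Rmin (Rmax (2*t) B) (Rmax (2*X) B) / B)).
  { apply ln_le. apply Rdiv_lt_0_compat; lra. apply Rmult_le_compat_r; [|lra].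
    apply Rlt_le, Rinv_0_lt_compat; lra. }
  assert (HBl : 0 <= B / ln 2) by (apply Rlt_le, Rdiv_lt_0_compat; lra).
  assert (Hphi' : 0 <= (B / ln 2) * (ln (Rmin (Rmax (2*t) B) (Rmax (2*X) B) / B) - ln (Rmin (Rmax t B) (Rmax (2*X) B) / B))).
  { apply Rmult_le_pos; lra. }
  destruct (Req_dec c 0) as [->|Hc]; [lra|].
  assert (HtX : t < X) by (apply HX; lra).
  destruct (Rle_or_lt t B) as [HtB|HtB].
  - assert (Rmin (2*t) (2*B) = 2 * t) by (unfold Rmin; destruct Rle_dec; lra).
    assert (Rmin t (2*B) = t) by (unfold Rmin; destruct Rle_dec; lra).
    lra.
  - assert (E1 : Rmin (Rmax (2*t) B) (Rmax (2*X) B) = 2 * t) by (unfold Rmin, Rmax; repeat destruct Rle_dec; lra).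
    assert (E2 : Rmin (Rmax t B) (Rmax (2*X) B) = t) by (unfold Rmin, Rmax; repeat destruct Rle_dec; lra).
    rewrite E1, E2.
    replace (2 * t / B) with (2 * (t / B)) by (field; lra).
    rewrite ln_mult by (try apply Rdiv_lt_0_compat; lra).
    replace (B / ln 2 * (ln 2 + ln (t / B) - ln (t / B))) with B by (field; lra).
    lra.
Qed.

Definition sR {A} (l : list A) (f : A -> R) : R := fold_right Rplus 0 (map f l).

Lemma sR_le {A} (l : list A) f g : (forall x, In x l -> f x <= g x) -> sR l f <= sR l g.
Proof.
  unfold sR. induction l as [|a l IH]; intros H; simpl; [lra|].
  apply Rplus_le_compat; [apply H; left; auto|]. apply IH. intros; apply H; right; auto.
Qed.

Lemma sR_plus {A} (l : list A) f g : sR l (fun x => f x + g x) = sR l f + sR l g.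
Proof. unfold sR. induction l; simpl; [ring|]. rewrite IHl. ring. Qed.

Lemma sR_scal {A} (l : list A) c f : sR l (fun x => c * f x) = c * sR l f.
Proof. unfold sR. induction l; simpl; [ring|]. rewrite IHl. ring. Qed.

Lemma sR_const {A} (l : list A) c : sR l (fun _ => c) = INR (length l) * c.
Proof. unfold sR. induction l; simpl length; simpl; [ring|]. rewrite IHl. rewrite ?S_INR. destruct (length l); simpl; ring. Qed.

Lemma sR_tele (f : nat -> R) K : sR (seq 0 K) (fun k => f (Datatypes.S k) - f k) = f K - f 0%nat.
Proof.
  induction K; [unfold sR; simpl; ring|].
  rewrite seq_S. unfold sR in *. rewrite map_app, fold_right_app. simpl.
  rewrite <- (Rplus_0_r (f (Datatypes.S K) - f K)).
  assert (forall l a, fold_right Rplus a l = a + fold_right Rplus 0 l).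
  { induction l; intros; simpl; [ring|]. rewrite IHl. ring. }
  rewrite H. rewrite IHK. ring.
Qed.

Lemma INR_list_sum {A} (l : list A) (g : A -> nat) : INR (list_sum (map g l)) = sR l (fun x => INR (g x)).
Proof. unfold sR. induction l; simpl; [reflexivity|]. rewrite plus_INR, IHl. reflexivity. Qed.

Lemma sR_nonneg {A} (l : list A) f : (forall x, In x l -> 0 <= f x) -> 0 <= sR l f.
Proof.
  intros H. replace 0 with (sR l (fun _ => 0)). apply sR_le; auto.
  rewrite sR_const. ring.
Qed.

Lemma sR_term {A} (l : list A) f a : (forall x, In x l -> 0 <= f x) -> In a l -> f a <= sR l f.
Proof.
  induction l as [|b l IH]; intros H Ha; [destruct Ha|].
  change (sR (b :: l) f) with (f b + sR l f).
  assert (0 <= sR l f) by (apply sR_nonneg; intros; apply H; right; auto).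
  destruct Ha as [<-|Ha]. lra.
  pose proof (H b (or_introl eq_refl)). pose proof (IH (fun x Hx => H x (or_intror Hx)) Ha). lra.
Qed.

Definition cutb n m P delta s k i := tb (cut n m P delta (piece s k i)).
Definition cnt n m P delta s k := length (filter (cutb n m P delta s k) (seq 0 (2 ^ k))).

Lemma cnt_le_pow n m P delta s k : INR (cnt n m P delta s k) <= 2 ^ k.
Proof.
  unfold cnt. pose proof (filter_length_le (cutb n m P delta s k) (seq 0 (2^k))).
  rewrite length_seq in H. apply le_INR in H. rewrite pow_INR in H. simpl in H. exact H.
Qed.

Lemma INR_list_sum_le {A} (l : list A) (g : A -> nat) c : (forall x, In x l -> INR (g x) <= c) ->
  INR (list_sum (map g l)) <= INR (length l) * c.
Proof.
  intros H. rewrite INR_list_sum, <- sR_const. apply sR_le. exact H.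
Qed.

Lemma cut_level n m P delta s k i : (1 <= n)%nat -> (1 <= m)%nat -> 0 < delta <= 1/2 ->
  cut n m P delta (piece s k i) ->
  0 < seg_len s /\ 2 ^ k < seg_len s * INR n * INR m * 3 / delta ^ 2 /\
  exists i0, (i0 < n)%nat /\ exists x, on_seg (piece s k i) x /\
     delta * dist2 (P i0) x < 2 * seg_len (piece s k i).
Proof.
  intros Hn Hm Hd [Hnw [i0 [Hi0 Hr]]].
  assert (Hnw' : ~ Defs.within (P i0) (piece s k i) (delta / (INR n * INR m))).
  { intro Hw. apply Hnw. exists i0. split; auto. }
  destruct (cut_facts _ _ _ _ (proj1 Hd) Hnw' Hr) as [HL [Hx Heps]].
  rewrite seg_len_piece in HL, Heps.
  pose proof (pow2R_pos k).
  apply le_INR in Hn, Hm. simpl in Hn, Hm.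
  assert (0 < seg_len s).
  { destruct (Rle_or_lt (seg_len s) 0); auto. exfalso.
    assert (seg_len s / 2 ^ k <= 0). { unfold Rdiv. pose proof (Rinv_0_lt_compat _ H). nra. } lra. }
  split; auto. split.
  - set (L := seg_len s) in *. set (t := 2 ^ k) in *.
    set (N := INR n * INR m) in *.
    assert (HN : 1 <= N) by (unfold N; nra).
    assert (E1 : delta / N * delta = delta ^ 2 / N) by (field; lra).
    assert (E2 : L / t * (2 + delta) = L * (2 + delta) / t) by (field; lra).
    rewrite E1, E2 in Heps.
    apply (Rmult_lt_compat_r (N * t)) in Heps; [|nra].
    replace (delta ^ 2 / N * (N * t)) with (delta^2 * t) in Heps by (field; lra).
    replace (L * (2 + delta) / t * (N * t)) with (L * (2 + delta) * N) in Heps by (field; lra).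
    replace (L * INR n * INR m * 3 / delta ^ 2) with (L * N * 3 / delta ^ 2) by (unfold N; field; lra).
    apply (Rmult_lt_reg_r (delta ^ 2)); [nra|].
    replace (L * N * 3 / delta ^ 2 * delta ^ 2) with (L * N * 3) by (field; lra).
    assert (0 < L * N) by nra. assert (L * (2 + delta) * N <= L * N * 3) by nra. nra.
  - exists i0. split; auto.
Qed.

Lemma cnt_le_B n m P delta s k : (1 <= n)%nat -> (1 <= m)%nat -> 0 < delta <= 1/2 ->
  INR (cnt n m P delta s k) <= INR n * (4 / delta + 2).
Proof.
  intros Hn Hm Hd.
  set (nearb i0 i := tb (0 < seg_len s /\ exists x, on_seg (piece s k i) x /\
     delta * dist2 (P i0) x < 2 * seg_len (piece s k i))).
  assert (Hinc : incl (filter (cutb n m P delta s k) (seq 0 (2 ^ k)))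
                      (flat_map (fun i0 => filter (nearb i0) (seq 0 (2 ^ k))) (seq 0 n))).
  { intros i Hi. apply filter_In in Hi. destruct Hi as [Hi Hc].
    unfold cutb in Hc. apply (proj1 (tb_iff _)) in Hc.
    destruct (cut_level _ _ _ _ _ _ _ Hn Hm Hd Hc) as [Hs [_ [i0 [Hi0 Hx]]]].
    apply in_flat_map. exists i0. split; [apply in_seq; lia|].
    apply filter_In. split; auto. unfold nearb. apply (proj2 (tb_iff _)). auto. }
  pose proof (NoDup_incl_length (NoDup_filter _ (seq_NoDup _ _)) Hinc) as Hl.
  apply le_INR in Hl. unfold cnt. eapply Rle_trans; [exact Hl|].
  rewrite length_flat_map.
  eapply Rle_trans; [apply (INR_list_sum_le _ _ (4 / delta + 2))|].
  - intros i0 _. replace (4 / delta + 2) with ((4 / delta + 1) + 1) by ring. apply count_window.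
    + apply Rlt_le. apply Rplus_lt_0_compat; [apply Rdiv_lt_0_compat|]; lra.
    + apply NoDup_filter, seq_NoDup.
    + intros x y Hx Hy. apply filter_In in Hx, Hy. destruct Hx as [_ Hx]. destruct Hy as [_ Hy].
      unfold nearb in Hx, Hy. apply (proj1 (tb_iff _)) in Hx. apply (proj1 (tb_iff _)) in Hy.
      destruct Hx as [Hs Hx]. destruct Hy as [_ Hy].
      eapply near_window; eauto; lra.
  - rewrite length_seq. lra.
Qed.

Lemma ln1p_le x : 0 <= x -> ln (1 + x) <= x.
Proof.
  intros Hx. destruct (Req_dec x 0) as [->|Hx0].
  - rewrite Rplus_0_r, ln_1. lra.
  - rewrite <- (ln_exp x) at 2. apply ln_le; [lra|]. left. apply exp_ineq1. exact Hx0.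
Qed.

Lemma seg_bound n m P delta s K : (1 <= n)%nat -> (1 <= m)%nat -> 0 < delta <= 1/2 ->
  sR (seq 0 K) (fun k => INR (cnt n m P delta s k)) <=
  2 * (5 * INR n / delta) + (5 * INR n / delta / ln 2) * (seg_len s * INR m + 2 * ln (1 / delta)).
Proof.
  intros Hn Hm Hd.
  pose proof ln2_pos as Hl2.
  assert (HnR : 1 <= INR n) by (apply le_INR in Hn; exact Hn).
  assert (HmR : 1 <= INR m) by (apply le_INR in Hm; exact Hm).
  assert (Hid : 2 <= 1 / delta).
  { apply (Rmult_le_reg_r delta); [lra|]. field_simplify; lra. }
  set (B := 5 * INR n / delta).
  assert (HB : 1 <= B).
  { unfold B. replace (5 * INR n / delta) with (5 * INR n * (1 / delta)) by (field; lra). nra. }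
  set (X := seg_len s * INR n * INR m * 3 / delta ^ 2).
  assert (HX : 0 <= X).
  { unfold X. pose proof (seg_len_nonneg s). apply Rmult_le_pos; [|apply Rlt_le, Rinv_0_lt_compat; nra].
    repeat apply Rmult_le_pos; try lra; apply pos_INR. }
  set (psi := fun k : nat => Rmin (2 ^ k) (2 * B)).
  set (phi := fun k : nat => ln (Rmin (Rmax (2 ^ k) B) (Rmax (2 * X) B) / B)).
  assert (Hstep : forall k, In k (seq 0 K) -> INR (cnt n m P delta s k) <=
     (psi (Datatypes.S k) - psi k) + (B / ln 2) * (phi (Datatypes.S k) - phi k)).
  { intros k _. unfold psi, phi. simpl pow at 1 3.
    apply level_abs.
    - apply pow2R_pos.
    - exact HB.
    - apply pos_INR.
    - apply cnt_le_pow.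
    - eapply Rle_trans; [apply cnt_le_B; auto|]. unfold B.
      replace (5 * INR n / delta) with (INR n * (4 / delta + 1 / delta)) by (field; lra).
      apply Rmult_le_compat_l; lra.
    - intros Hc. unfold cnt in Hc.
      destruct (filter (cutb n m P delta s k) (seq 0 (2 ^ k))) as [|i l] eqn:Ef.
      + simpl in Hc. lra.
      + assert (Hi : In i (filter (cutb n m P delta s k) (seq 0 (2 ^ k)))) by (rewrite Ef; left; auto).
        apply filter_In in Hi. destruct Hi as [_ Hi]. unfold cutb in Hi.
        apply (proj1 (tb_iff _)) in Hi.
        destruct (cut_level _ _ _ _ _ _ _ Hn Hm Hd Hi) as [_ [Ht _]]. exact Ht. }
  eapply Rle_trans; [apply sR_le; exact Hstep|].
  rewrite sR_plus, sR_scal.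
  rewrite (sR_tele psi K), (sR_tele phi K).
  assert (Hpsi : psi K - psi 0%nat <= 2 * B).
  { unfold psi. simpl pow. unfold Rmin; repeat destruct Rle_dec; lra. }
  assert (Hphi0 : phi 0%nat = 0).
  { unfold phi. simpl pow. replace (Rmin (Rmax 1 B) (Rmax (2 * X) B)) with B.
    replace (B / B) with 1 by (field; lra). apply ln_1.
    unfold Rmin, Rmax; repeat destruct Rle_dec; lra. }
  assert (HphiK : phi K <= seg_len s * INR m + 2 * ln (1 / delta)).
  { unfold phi.
    pose proof (pow2R_pos K).
    assert (HL : 0 <= seg_len s) by apply seg_len_nonneg.
    set (a := seg_len s * INR m).
    set (b := 6 / (5 * delta)).
    assert (Ha : 0 <= a) by (unfold a; nra).
    assert (Hb : 0 <= b) by (unfold b; apply Rlt_le, Rdiv_lt_0_compat; lra).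
    assert (H2X : 2 * X / B = a * b).
    { unfold X, B, a, b. field. split; lra. }
    apply Rle_trans with (ln ((1 + a) * (1 + b))).
    { apply ln_le. apply Rdiv_lt_0_compat; [|lra]. unfold Rmin, Rmax; repeat destruct Rle_dec; lra.
      apply Rle_trans with (1 + 2 * X / B).
      - apply (Rmult_le_reg_r B); [lra|]. 
        replace (Rmin (Rmax (2 ^ K) B) (Rmax (2 * X) B) / B * B) with (Rmin (Rmax (2 ^ K) B) (Rmax (2 * X) B)) by (field; lra).
        replace ((1 + 2 * X / B) * B) with (B + 2 * X) by (field; lra).
        unfold Rmin, Rmax; repeat destruct Rle_dec; lra.
      - rewrite H2X. nra. }
    rewrite ln_mult by lra.
    apply Rplus_le_compat; [apply ln1p_le; exact Ha|].
    replace (2 * ln (1 / delta)) with (ln (1 / delta * (1 / delta))) by (rewrite ln_mult by lra; ring).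
    apply ln_le; [lra|]. unfold b.
    apply (Rmult_le_reg_r (delta * delta)); [nra|].
    replace (1 / delta * (1 / delta) * (delta * delta)) with 1 by (field; lra).
    replace ((1 + 6 / (5 * delta)) * (delta * delta)) with (delta * delta + 6 / 5 * delta) by (field; lra).
    nra. }
  assert (HBl : 0 <= B / ln 2) by (apply Rlt_le, Rdiv_lt_0_compat; lra).
  rewrite Hphi0. fold B.
  apply Rplus_le_compat; [lra|]. apply Rmult_le_compat_l; lra.
Qed.

Lemma INR_le_pow2 k : INR k <= 2 ^ k.
Proof.
  induction k; [simpl; lra|]. rewrite S_INR. simpl pow. pose proof (pow2R_pos k).
  assert (1 <= 2 ^ k). { apply pow_R1_Rle. lra. } lra.
Qed.

Theorem lemma5 :
  exists C : R, 0 < C /\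
  forall (n m : nat) (P : nat -> pt) (w : nat -> R) (S : nat -> segment)
         (delta : R),
    (forall i j, (i < n)%nat -> (j < n)%nat -> P i = P j -> i = j) ->
    (forall i, (i < n)%nat -> 0 <= w i) ->
    sumR n w = 1 ->
    (forall j j', (j < m)%nat -> (j' < m)%nat ->
       (S j = S j' \/ S j = (snd (S j'), fst (S j'))) -> j = j') ->
    sumR m (fun j => seg_len (S j)) = 1 ->
    0 < delta <= 1 / 2 ->
    forall l : list (nat * nat * nat),
      NoDup l ->
      (forall x, In x l -> final_piece n m P S delta x) ->
      INR (length l) <= C * (INR n * INR m / delta) * ln (1 / delta).
Proof.
  pose proof ln2_pos as Hl2.
  exists (41 / ln 2 + 10 / (ln 2 * ln 2)). split.
  { apply Rplus_lt_0_compat; apply Rdiv_lt_0_compat; nra. }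
  intros n m P w Sg delta _ _ Hsw _ Hlen Hd l Hnd Hfin.
  assert (Hn : (1 <= n)%nat).
  { destruct n; [|lia]. unfold sumR in Hsw. simpl in Hsw. lra. }
  assert (Hm : (1 <= m)%nat).
  { destruct m; [|lia]. unfold sumR in Hlen. simpl in Hlen. lra. }
  change (sumR m (fun j => seg_len (Sg j))) with (sR (seq 0 m) (fun j => seg_len (Sg j))) in Hlen.
  assert (Hlj : forall j, (j < m)%nat -> seg_len (Sg j) <= 1).
  { intros j Hj. rewrite <- Hlen. apply (sR_term _ (fun j => seg_len (Sg j))).
    intros; apply seg_len_nonneg. apply in_seq; lia. }
  assert (HnR : 1 <= INR n) by (apply le_INR in Hn; exact Hn).
  assert (HmR : 1 <= INR m) by (apply le_INR in Hm; exact Hm).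
  destruct (INR_unbounded (INR n * INR m * 3 / delta ^ 2)) as [K HK].
  set (U := map (fun j => (j, 0%nat, 0%nat)) (seq 0 m) ++
     flat_map (fun j => flat_map (fun k => flat_map (fun i => (j, Datatypes.S k, 2 * i)%nat :: (j, Datatypes.S k, 2 * i + 1)%nat :: nil)
        (filter (cutb n m P delta (Sg j) k) (seq 0 (2 ^ k)))) (seq 0 K)) (seq 0 m)).
  assert (Hinc : incl l U).
  { intros [[j k] i] Hx. specialize (Hfin _ Hx). simpl in Hfin.
    destruct Hfin as [Hj [Hi [Hanc Hnc]]].
    unfold U. apply in_app_iff.
    destruct k as [|k0].
    - left. simpl in Hi. assert (i = 0%nat) by lia. subst i.
      apply in_map_iff. exists j. split; auto. apply in_seq; lia.
    - right. specialize (Hanc k0 (Nat.lt_succ_diag_r k0)).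
      replace (Datatypes.S k0 - k0)%nat with 1%nat in Hanc by lia. simpl (2 ^ 1)%nat in Hanc.
      assert (Hk0 : (k0 < K)%nat).
      { destruct (Nat.lt_ge_cases k0 K) as [H|H]; [exact H|]. exfalso.
        destruct (cut_level _ _ _ _ _ _ _ Hn Hm Hd Hanc) as [Hs [Ht _]].
        pose proof (Rle_pow 2 K k0 ltac:(lra) H).
        pose proof (INR_le_pow2 K).
        pose proof (Hlj j Hj).
        assert (seg_len (Sg j) * INR n * INR m * 3 / delta ^ 2 <= INR n * INR m * 3 / delta ^ 2).
        { unfold Rdiv. apply Rmult_le_compat_r. apply Rlt_le, Rinv_0_lt_compat. nra.
          assert (0 <= INR n * INR m * 3) by nra. nra. }
        lra. }
      apply in_flat_map. exists j. split; [apply in_seq; lia|].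
      apply in_flat_map. exists k0. split; [apply in_seq; lia|].
      apply in_flat_map. exists (i / 2)%nat. split.
      + apply filter_In. split.
        * apply in_seq. change (2 ^ Datatypes.S k0)%nat with (2 * 2 ^ k0)%nat in Hi. revert Hi. generalize (2 ^ k0)%nat. intros t Ht. split; [lia|]. rewrite ?Nat.add_0_l. apply Nat.Div0.div_lt_upper_bound. exact Ht.
        * unfold cutb. apply (proj2 (tb_iff _)). exact Hanc.
      + assert (Hdm := Nat.div_mod i 2 ltac:(lia)). assert (Hmd := Nat.mod_upper_bound i 2 ltac:(lia)).
        destruct (i mod 2)%nat as [|[|q]] eqn:Em; [left|right; left|lia]; f_equal; lia. }
  pose proof (NoDup_incl_length Hnd Hinc) as HlU. apply le_INR in HlU.
  assert (HU : INR (length U) <= INR m + sR (seq 0 m) (fun j => 2 * sR (seq 0 K) (fun k => INR (cnt n m P delta (Sg j) k)))).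
  { unfold U. rewrite length_app, plus_INR, length_map, length_seq. apply Rplus_le_compat_l.
    rewrite length_flat_map, INR_list_sum. apply sR_le. intros j _.
    rewrite length_flat_map, INR_list_sum. rewrite <- sR_scal. apply sR_le. intros k _.
    rewrite (flat_map_constant_length (c:=2%nat)) by (intros; reflexivity).
    rewrite mult_INR. unfold cnt. simpl (INR 2). lra. }
  set (B := 5 * INR n / delta) in *.
  set (Lam := ln (1 / delta)).
  assert (Hsum : sR (seq 0 m) (fun j => 2 * sR (seq 0 K) (fun k => INR (cnt n m P delta (Sg j) k))) <=
     sR (seq 0 m) (fun j => (4 * B + 2 * (B / ln 2) * (2 * Lam)) + (2 * (B / ln 2) * INR m) * seg_len (Sg j))).
  { apply sR_le. intros j _. pose proof (seg_bound n m P delta (Sg j) K Hn Hm Hd). fold B in H. fold Lam in H. lra. }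
  rewrite sR_plus, sR_const, (sR_scal _ (2 * (B / ln 2) * INR m) (fun j => seg_len (Sg j))), Hlen, length_seq in Hsum.
  assert (Hid : 2 <= 1 / delta).
  { apply (Rmult_le_reg_r delta); [lra|]. field_simplify; lra. }
  assert (HLam : ln 2 <= Lam) by (unfold Lam; apply ln_le; lra).
  set (A := INR n * INR m / delta).
  assert (HBm : B * INR m = 5 * A) by (unfold A, B; field; lra).
  assert (HmA : INR m <= A).
  { unfold A. replace (INR n * INR m / delta) with (INR m * (INR n * (1 / delta))) by (field; lra). assert (1 <= INR n * (1 / delta)) by nra. nra. }
  assert (HA : 0 <= A) by lra.
  assert (Htot : INR (length l) <= A + 20 * A + (10 * A / ln 2) * (1 + 2 * Lam)).
  { replace (A + 20 * A + 10 * A / ln 2 * (1 + 2 * Lam)) with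
       (A + (INR m * (4 * B + 2 * (B / ln 2) * (2 * Lam)) + 2 * (B / ln 2) * INR m * 1)) .
    lra. unfold A, B. field. split; lra. }
  assert (HL1 : 1 <= Lam / ln 2).
  { apply (Rmult_le_reg_r (ln 2)); [lra|]. field_simplify; lra. }
  assert (E1 : A <= A * Lam / ln 2).
  { replace (A * Lam / ln 2) with (A * (Lam / ln 2)) by (field; lra). nra. }
  assert (E2 : 10 * A / ln 2 <= 10 * A * Lam / (ln 2 * ln 2)).
  { replace (10 * A * Lam / (ln 2 * ln 2)) with (10 * A / ln 2 * (Lam / ln 2)) by (field; lra).
    assert (0 <= 10 * A / ln 2) by (apply Rmult_le_pos; [lra|apply Rlt_le, Rinv_0_lt_compat; lra]). nra. }
  replace ((41 / ln 2 + 10 / (ln 2 * ln 2)) * A * Lam) with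
    (21 * (A * Lam / ln 2) + 10 * A * Lam / (ln 2 * ln 2) + 10 * A / ln 2 * (2 * Lam)) by (field; lra).
  lra.
Qed.
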